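(* Assume $\Gamma=[U^{\sf T}\ X^{\sf T}]^{\sf T}$ has full row rank and $Z=AX+BU$. Let $\Delta=[\Delta_Z^{\sf T}\ \Delta_X^{\sf T}\ \Delta_U^{\sf T}]^{\sf T}$ be a perturbation, $(Z_\Delta,X_\Delta,U_\Delta)=(Z+\Delta_Z,X+\Delta_X,U+\Delta_U)$, $\Gamma_\Delta=[U_\Delta^{\sf T}\ X_\Delta^{\sf T}]^{\sf T}$, and let $(P_\Delta,K_\Delta,G_\Delta)$ be an optimal solution of the regularized problem (RP) posed with the perturbed data. Set $M_\Delta=G_\Delta P_\Delta G_\Delta^{\sf T}$. If $$\mu>\left(-1+\sqrt{1+\frac{1}{2\|Z\|_2^2\|M_\Delta\|_2}}\right)^{-1},$$ then $A+BK_\Delta$ is Schur stable, i.e. $\rho(A+BK_\Delta)<1$.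
   Context: $A\in\mathbb{R}^{n\times n}$, $B\in\mathbb{R}^{n\times m}$; data $Z,X\in\mathbb{R}^{n\times T}$, $U\in\mathbb{R}^{m\times T}$. $Q\in\mathbb{R}^{n\times n}$ symmetric positive semidefinite, $R\in\mathbb{R}^{m\times m}$ symmetric positive definite, $\gamma\ge0$. For data $(\tilde Z,\tilde X,\tilde U)$ with $\tilde\Gamma=[\tilde U^{\sf T}\ \tilde X^{\sf T}]^{\sf T}$ and $\tilde\Pi=I_T-\tilde\Gamma^\dagger\tilde\Gamma$, problem (RP) is: minimize over $P\in\mathbb{R}^{n\times n}$ symmetric, $K\in\mathbb{R}^{m\times n}$, $G\in\mathbb{R}^{T\times n}$ the cost ${\rm tr}(QP)+{\rm tr}(K^{\sf T}RKP)+\gamma\|\tilde\Pi G\|_F^2$ subject to $\tilde ZGPG^{\sf T}\tilde Z^{\sf T}-P+I_n\preceq0$, $P\succeq I_n$, and $[K^{\sf T}\ I_n]^{\sf T}=\tilde\Gamma G$. The signal-to-perturbation ratio is $\mu=\min\big(\|Z\|_2/\|\Delta_Z\|_2,\ \sigma_{\min}(\Gamma)/\|\Delta_\Gamma\|_2\big)$ with $\Delta_\Gamma=[\Delta_U^{\sf T}\ \Delta_X^{\sf T}]^{\sf T}$ (a ratio with zero denominator is $+\infty$). $\|\cdot\|_2$ is the spectral norm, $\sigma_{\min}$ the smallest singular value, $\rho$ the spectral radius. *)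

(* Defs.v *)
From HB Require Import structures.
From mathcomp Require Import all_boot all_order all_algebra.
From mathcomp Require Import all_classical all_reals.
From mathcomp Require Import complex.
Set Implicit Arguments. Unset Strict Implicit. Unset Printing Implicit Defensive.
Import Order.TTheory GRing.Theory Num.Theory.
Local Open Scope classical_set_scope.
Local Open Scope ring_scope.

Section Defs.
Variable R : realType.

Definition vnorm k (v : 'cV[R]_k) : R := Num.sqrt (\sum_i (v i 0) ^+ 2).

Definition spec_norm p q (A : 'M[R]_(p, q)) : R :=
  sup [set vnorm (A *m x) | x in [set x : 'cV[R]_q | vnorm x = 1]].

(* smallest singular value: the min(p,q)-th singular value of A *)
Definition sigma_min p q (A : 'M[R]_(p, q)) : R :=
  if (p <= q)%N then
    inf [set vnorm (A^T *m y) | y in [set y : 'cV[R]_p | vnorm y = 1]]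
  else
    inf [set vnorm (A *m x) | x in [set x : 'cV[R]_q | vnorm x = 1]].

Definition frob2 p q (A : 'M[R]_(p, q)) : R := \sum_i \sum_j (A i j) ^+ 2.

Definition is_pinv p q (A : 'M[R]_(p, q)) (B : 'M[R]_(q, p)) : Prop :=
  [/\ A *m B *m A = A, B *m A *m B = B,
      (A *m B)^T = A *m B & (B *m A)^T = B *m A].
Definition pinv p q (A : 'M[R]_(p, q)) : 'M[R]_(q, p) :=
  xget 0 [set B | is_pinv A B].

Definition loewner_le k (A B : 'M[R]_k) : Prop :=
  forall x : 'cV[R]_k, 0 <= (x^T *m (B - A) *m x) 0 0.

Definition is_sym k (A : 'M[R]_k) : Prop := A^T = A.
Definition is_psd k (A : 'M[R]_k) : Prop := is_sym A /\ loewner_le 0 A.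
Definition is_pd k (A : 'M[R]_k) : Prop :=
  is_sym A /\ forall x : 'cV[R]_k, x != 0 -> 0 < (x^T *m A *m x) 0 0.

Definition Gam m n T (U : 'M[R]_(m, T)) (X : 'M[R]_(n, T)) : 'M[R]_(m + n, T) :=
  col_mx U X.

Definition Pi m n T (U : 'M[R]_(m, T)) (X : 'M[R]_(n, T)) : 'M[R]_T :=
  1%:M - pinv (Gam U X) *m Gam U X.

Definition RP_feasible m n T (Z X : 'M[R]_(n, T)) (U : 'M[R]_(m, T))
    (P : 'M[R]_n) (K : 'M[R]_(m, n)) (G : 'M[R]_(T, n)) : Prop :=
  [/\ is_sym P,
      loewner_le (Z *m G *m P *m G^T *m Z^T - P + 1%:M) 0,
      loewner_le 1%:M P
    & col_mx K (1%:M : 'M[R]_n) = Gam U X *m G].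

Definition RP_cost m n T (Q : 'M[R]_n) (Rm : 'M[R]_m) (gamma : R)
    (X : 'M[R]_(n, T)) (U : 'M[R]_(m, T))
    (P : 'M[R]_n) (K : 'M[R]_(m, n)) (G : 'M[R]_(T, n)) : R :=
  \tr (Q *m P) + \tr (K^T *m Rm *m K *m P) + gamma * frob2 (Pi U X *m G).

Definition RP_optimal m n T (Q : 'M[R]_n) (Rm : 'M[R]_m) (gamma : R)
    (Z X : 'M[R]_(n, T)) (U : 'M[R]_(m, T))
    (P : 'M[R]_n) (K : 'M[R]_(m, n)) (G : 'M[R]_(T, n)) : Prop :=
  RP_feasible Z X U P K G /\
  forall P' K' G', RP_feasible Z X U P' K' G' ->
    RP_cost Q Rm gamma X U P K G <= RP_cost Q Rm gamma X U P' K' G'.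

Definition eratio (a b : R) : \bar R :=
  if b == 0 then +oo%E else (a / b)%:E.

Definition spr m n T (Z X DZ DX : 'M[R]_(n, T)) (U DU : 'M[R]_(m, T)) : \bar R :=
  Order.min (eratio (spec_norm Z) (spec_norm DZ))
            (eratio (sigma_min (Gam U X)) (spec_norm (Gam DU DX))).

Definition cmod (z : R[i]) : R := let: Complex a b := z in Num.sqrt (a ^+ 2 + b ^+ 2).

Definition spectral_radius n (A : 'M[R]_n) : R :=
  sup [set cmod l | l in [set l : R[i] | eigenvalue (map_mx (real_complex R) A) l]].

End Defs.

(* Main.v *)
Require Import Defs.
From HB Require Import structures.
From mathcomp Require Import all_boot all_order all_algebra.
From mathcomp Require Import all_classical all_reals.
From mathcomp Require Import complex.
From mathcomp Require Import ring lra.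
Import Order.TTheory GRing.Theory Num.Theory.
Local Open Scope classical_set_scope.
Local Open Scope ring_scope.
Notation CRe := (@complex.Re _).
Notation CIm := (@complex.Im _).
Set Implicit Arguments. Unset Strict Implicit. Unset Printing Implicit Defensive.
Section S.
Variable R : realType.

Definition dot k (u v : 'cV[R]_k) : R := (u^T *m v) 0 0.

Lemma dotE k (u v : 'cV[R]_k) : dot u v = \sum_i u i 0 * v i 0.
Proof. by rewrite /dot mxE; apply: eq_bigr => i _; rewrite mxE. Qed.

Lemma dot_ge0 k (u : 'cV[R]_k) : 0 <= dot u u.
Proof. by rewrite dotE; apply: sumr_ge0 => i _; rewrite -expr2 sqr_ge0. Qed.

Lemma vnormE k (u : 'cV[R]_k) : vnorm u = Num.sqrt (dot u u).
Proof. by rewrite /vnorm dotE; congr Num.sqrt; apply: eq_bigr => i _; rewrite expr2. Qed.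

Lemma vnorm_ge0 k (u : 'cV[R]_k) : 0 <= vnorm u.
Proof. by rewrite vnormE sqrtr_ge0. Qed.

Lemma vnorm_sq k (u : 'cV[R]_k) : vnorm u ^+ 2 = dot u u.
Proof. by rewrite vnormE sqr_sqrtr // dot_ge0. Qed.

Lemma dotC k (u v : 'cV[R]_k) : dot u v = dot v u.
Proof. by rewrite !dotE; apply: eq_bigr => i _; rewrite mulrC. Qed.

Lemma dotDr k (u v w : 'cV[R]_k) : dot u (v + w) = dot u v + dot u w.
Proof. by rewrite /dot mulmxDr mxE. Qed.
Lemma dotDl k (u v w : 'cV[R]_k) : dot (v + w) u = dot v u + dot w u.
Proof. by rewrite dotC dotDr !(dotC u). Qed.
Lemma dotZr k a (u v : 'cV[R]_k) : dot u (a *: v) = a * dot u v.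
Proof. by rewrite /dot -scalemxAr mxE. Qed.
Lemma dotZl k a (u v : 'cV[R]_k) : dot (a *: v) u = a * dot v u.
Proof. by rewrite dotC dotZr dotC. Qed.
Lemma dotNr k (u v : 'cV[R]_k) : dot u (- v) = - dot u v.
Proof. by rewrite -scaleN1r dotZr mulN1r. Qed.
Lemma dotNl k (u v : 'cV[R]_k) : dot (- v) u = - dot v u.
Proof. by rewrite dotC dotNr dotC. Qed.
Lemma dotBr k (u v w : 'cV[R]_k) : dot u (v - w) = dot u v - dot u w.
Proof. by rewrite dotDr dotNr. Qed.
Lemma dotBl k (u v w : 'cV[R]_k) : dot (v - w) u = dot v u - dot w u.
Proof. by rewrite dotDl dotNl. Qed.

Lemma dot_tr p q (C : 'M[R]_(p, q)) (x : 'cV_p) (w : 'cV_q) :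
  dot x (C *m w) = dot (C^T *m x) w.
Proof. by rewrite /dot trmx_mul trmxK mulmxA. Qed.

Lemma dot0 k (u : 'cV[R]_k) : dot u u = 0 -> u = 0.
Proof.
rewrite dotE => H; apply/matrixP => i j; rewrite (ord1 j) mxE.
have h : forall i, u i 0 * u i 0 = 0.
  move=> i'; apply: (psumr_eq0P (P := xpredT) (F := fun i => u i 0 * u i 0)) => // l _.
  by rewrite -expr2 sqr_ge0.
by move: (h i) => /eqP; rewrite mulf_eq0 orbb => /eqP.
Qed.

Lemma cs_sum k (a b : 'I_k -> R) :
  (\sum_i a i * b i) ^+ 2 <= (\sum_i a i ^+ 2) * (\sum_i b i ^+ 2).
Proof.
set s := \sum_i a i ^+ 2; set t := \sum_i b i ^+ 2; set d := \sum_i a i * b i.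
have s0 : 0 <= s by apply: sumr_ge0 => i _; apply: sqr_ge0.
have t0 : 0 <= t by apply: sumr_ge0 => i _; apply: sqr_ge0.
have [s00|sp] := eqVneq s 0.
  have az : forall i, a i = 0.
    move=> i; apply/eqP; rewrite -sqrf_eq0; apply/eqP.
    by apply: (psumr_eq0P (P := xpredT) (F := fun i => a i ^+ 2)) => // j _; apply: sqr_ge0.
  rewrite s00 /d big1 ?expr0n ?mul0r // => i _; by rewrite az mul0r.
have sp' : 0 < s by rewrite lt_def sp s0.
have E : \sum_i (s * b i - d * a i) ^+ 2 = s ^+ 2 * t - 2 * s * d * d + d ^+ 2 * s.
  rewrite (eq_bigr (fun i => s ^+ 2 * b i ^+ 2 - (2 * s * d) * (a i * b i) + d ^+ 2 * a i ^+ 2)); last by move=> i _; ring.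
  by rewrite big_split sumrB /= -!mulr_sumr.
have : 0 <= \sum_i (s * b i - d * a i) ^+ 2 by apply: sumr_ge0 => i _; apply: sqr_ge0.
rewrite E => H.
have : 0 <= s * (s * t - d ^+ 2) by nra.
rewrite pmulr_rge0 // subr_ge0 => H2; nra.
Qed.


Lemma cs_dot k (u v : 'cV[R]_k) : dot u v ^+ 2 <= dot u u * dot v v.
Proof.
have E1 : \sum_i u i 0 ^+ 2 = dot u u by rewrite dotE; apply: eq_bigr => i _; rewrite expr2.
have E2 : \sum_i v i 0 ^+ 2 = dot v v by rewrite dotE; apply: eq_bigr => i _; rewrite expr2.
by have := cs_sum (fun i => u i 0) (fun i => v i 0); rewrite /= E1 E2 -dotE.
Qed.

Lemma dot_abs k (u v : 'cV[R]_k) : `|dot u v| <= vnorm u * vnorm v.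
Proof.
rewrite !vnormE -sqrtrM ?dot_ge0 // -sqrtr_sqr ler_sqrt ?cs_dot //.
by rewrite mulr_ge0 ?dot_ge0.
Qed.

Lemma dot_le k (u v : 'cV[R]_k) : dot u v <= vnorm u * vnorm v.
Proof. exact: le_trans (ler_norm _) (dot_abs _ _). Qed.

Lemma vnormZ k a (u : 'cV[R]_k) : vnorm (a *: u) = `|a| * vnorm u.
Proof. by rewrite !vnormE dotZl dotZr mulrA -expr2 sqrtrM ?sqr_ge0 // sqrtr_sqr. Qed.

Lemma vnorm0 k (u : 'cV[R]_k) : vnorm u = 0 -> u = 0.
Proof. by move=> H; apply: dot0; rewrite -vnorm_sq H expr0n. Qed.

Lemma vnorm_0 k : vnorm (0 : 'cV[R]_k) = 0.
Proof. by rewrite vnormE /dot trmx0 mul0mx mxE sqrtr0. Qed.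

Lemma frob_bound p q (A : 'M[R]_(p, q)) (x : 'cV_q) :
  vnorm (A *m x) <= Num.sqrt (frob2 A) * vnorm x.
Proof.
rewrite !vnormE -sqrtrM; last by rewrite /frob2; apply: sumr_ge0 => i _; apply: sumr_ge0 => j _; apply: sqr_ge0.
rewrite ler_sqrt; last by rewrite mulr_ge0 ?dot_ge0 // /frob2; apply: sumr_ge0 => i _; apply: sumr_ge0 => j _; apply: sqr_ge0.
rewrite dotE /frob2 mulr_suml; apply: ler_sum => i _.
rewrite -expr2 mxE.
have E2 : \sum_j x j 0 ^+ 2 = dot x x by rewrite dotE; apply: eq_bigr => j _; rewrite expr2.
by have := cs_sum (fun j => A i j) (fun j => x j 0); rewrite /= E2.
Qed.

Definition Sset p q (A : 'M[R]_(p, q)) :=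
  [set vnorm (A *m x) | x in [set x : 'cV[R]_q | vnorm x = 1]].

Lemma Sset_ub p q (A : 'M[R]_(p, q)) : has_ubound (Sset A).
Proof.
exists (Num.sqrt (frob2 A)) => _ [x /= hx <-].
by have := frob_bound A x; rewrite hx mulr1.
Qed.

Lemma spec_ub p q (A : 'M[R]_(p, q)) (x : 'cV_q) :
  vnorm (A *m x) <= spec_norm A * vnorm x.
Proof.
have [h0|hn] := eqVneq (vnorm x) 0.
  by rewrite (vnorm0 h0) mulmx0 !vnorm_0 mulr0.
have hp : 0 < vnorm x by rewrite lt_def hn vnorm_ge0.
set y := (vnorm x)^-1 *: x.
have hy : vnorm y = 1 by rewrite vnormZ ger0_norm ?invr_ge0 ?vnorm_ge0 // mulVf.
have : Sset A (vnorm (A *m y)) by exists y.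
move=> /(ub_le_sup (Sset_ub A)).
rewrite -/(spec_norm A) /y -scalemxAr vnormZ ger0_norm ?invr_ge0 ?vnorm_ge0 //.
by rewrite ler_pdivrMl // mulrC.
Qed.

Lemma spec_ge0 p q (A : 'M[R]_(p, q)) : 0 <= spec_norm A.
Proof.
case: (pselect (exists x : 'cV[R]_q, vnorm x = 1)) => [[x hx]|hn].
  by have := spec_ub A x; rewrite hx mulr1; apply: le_trans; apply: vnorm_ge0.
rewrite /spec_norm (_ : [set _ | _ in _] = set0) ?sup0 //.
apply/seteqP; split => y // [x hx _]; exfalso; apply: hn; by exists x.
Qed.

Lemma specT_ub p q (A : 'M[R]_(p, q)) (x : 'cV_p) :
  vnorm (A^T *m x) <= spec_norm A * vnorm x.
Proof.
set y := A^T *m x.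
have h1 : vnorm y ^+ 2 <= vnorm x * (spec_norm A * vnorm y).
  rewrite vnorm_sq {1}/y -dot_tr.
  apply: le_trans (dot_le _ _) _; apply: ler_wpM2l; first exact: vnorm_ge0.
  exact: spec_ub.
have := vnorm_ge0 y; have := vnorm_ge0 x; have := spec_ge0 A.
move: h1; set a := vnorm y; set b := vnorm x; set c := spec_norm A => h1 hc hb ha.
have [->|ap] := eqVneq a 0; first by rewrite mulr_ge0.
have ap' : 0 < a by rewrite lt_def ap ha.
have h2 : a * a <= (c * b) * a by move: h1; rewrite expr2 mulrA [b * c]mulrC.
by rewrite ler_pM2r // in h2.
Qed.

Lemma sigma_lb p q (A : 'M[R]_(p, q)) (y : 'cV_p) : (p <= q)%N ->
  sigma_min A * vnorm y <= vnorm (A^T *m y).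
Proof.
move=> hpq; rewrite /sigma_min hpq.
have [h0|hn] := eqVneq (vnorm y) 0; first by rewrite h0 mulr0 vnorm_ge0.
have hp : 0 < vnorm y by rewrite lt_def hn vnorm_ge0.
set z := (vnorm y)^-1 *: y.
have hz : vnorm z = 1 by rewrite vnormZ ger0_norm ?invr_ge0 ?vnorm_ge0 // mulVf.
set E := [set _ | _ in _].
have hE : E (vnorm (A^T *m z)) by exists z.
have lb : has_lbound E by exists 0 => _ [w _ <-]; apply: vnorm_ge0.
move: (ge_inf lb hE).
rewrite /z -scalemxAr vnormZ ger0_norm ?invr_ge0 ?vnorm_ge0 //.
by rewrite ler_pdivlMl // mulrC.
Qed.


Lemma ReD (a b : R[i]) : CRe (a + b) = CRe a + CRe b.
Proof. by case: a => a1 a2; case: b => b1 b2. Qed.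
Lemma ImD (a b : R[i]) : CIm (a + b) = CIm a + CIm b.
Proof. by case: a => a1 a2; case: b => b1 b2. Qed.
Lemma ReM (a b : R[i]) : CRe (a * b) = CRe a * CRe b - CIm a * CIm b.
Proof. by case: a => a1 a2; case: b => b1 b2. Qed.
Lemma ImM (a b : R[i]) : CIm (a * b) = CRe a * CIm b + CIm a * CRe b.
Proof. by case: a => a1 a2; case: b => b1 b2. Qed.
Lemma Re0 : CRe (0 : R[i]) = 0. Proof. by []. Qed.
Lemma Im0 : CIm (0 : R[i]) = 0. Proof. by []. Qed.
Lemma ReC (x : R) : CRe (real_complex R x) = x. Proof. by []. Qed.
Lemma ImC (x : R) : CIm (real_complex R x) = 0. Proof. by []. Qed.
Lemma Re_sum k (f : 'I_k -> R[i]) : CRe (\sum_i f i) = \sum_i CRe (f i).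
Proof. exact: (big_morph _ ReD Re0). Qed.
Lemma Im_sum k (f : 'I_k -> R[i]) : CIm (\sum_i f i) = \sum_i CIm (f i).
Proof. exact: (big_morph _ ImD Im0). Qed.

Lemma eig_bound n (K P : 'M[R]_n) e L (l : R[i]) :
  0 < e -> P^T = P ->
  (forall x : 'cV_n, dot x x <= dot x (P *m x)) ->
  (forall x : 'cV_n, dot x (P *m x) <= L * dot x x) ->
  (forall x : 'cV_n, dot (K^T *m x) (P *m (K^T *m x)) <= dot x (P *m x) - e * dot x x) ->
  eigenvalue (map_mx (real_complex R) K) l ->
  0 < L /\ CRe l ^+ 2 + CIm l ^+ 2 <= 1 - e / L.
Proof.
move=> e0 Ps hP1 hPL hly /eigenvalueP [v hv vn0].
set x : 'cV_n := \col_i CRe (v 0 i); set y : 'cV_n := \col_i CIm (v 0 i).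
set al := CRe l; set be := CIm l.
have hx : K^T *m x = al *: x - be *: y.
  apply/matrixP => i j; rewrite (ord1 j) !mxE.
  have E := congr1 (fun M : 'M[R[i]]_(1, n) => CRe (M 0 i)) hv.
  rewrite /= !mxE Re_sum ReM in E.
  rewrite -E; apply: eq_bigr => k _; rewrite !mxE ReM ReC ImC mulr0 subr0 mulrC.
  by [].
have hy : K^T *m y = be *: x + al *: y.
  apply/matrixP => i j; rewrite (ord1 j) !mxE.
  have E := congr1 (fun M : 'M[R[i]]_(1, n) => CIm (M 0 i)) hv.
  rewrite /= !mxE Im_sum ImM in E.
  rewrite [RHS]addrC -E; apply: eq_bigr => k _; rewrite !mxE ImM ReC ImC mulr0 add0r mulrC.
  by [].
have sym : forall u w : 'cV_n, dot u (P *m w) = dot w (P *m u).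
  by move=> u w; rewrite dot_tr Ps dotC.
set l2 := al ^+ 2 + be ^+ 2.
set p := dot x (P *m x) + dot y (P *m y).
set w := dot x x + dot y y.
have key : dot (K^T *m x) (P *m (K^T *m x)) + dot (K^T *m y) (P *m (K^T *m y)) = l2 * p.
  rewrite hx hy !mulmxBr !mulmxDr -!scalemxAr !(dotBl, dotBr, dotDl, dotDr, dotZl, dotZr).
  rewrite (sym y x) /l2 /p; ring.
have hyp : l2 * p <= p - e * w.
  by rewrite -key; have := hly x; have := hly y; rewrite /p /w; lra.
have wp : 0 < w.
  have hx0 := dot_ge0 x; have hy0 := dot_ge0 y.
  rewrite lt_def; apply/andP; split; last by rewrite addr_ge0.
  apply/eqP => w0.
  have x0 : x = 0 by apply: dot0; rewrite /w in w0; lra.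
  have y0 : y = 0 by apply: dot0; rewrite /w in w0; lra.
  move/eqP: vn0; apply; apply/matrixP => i j; rewrite (ord1 i) mxE.
  move: (congr1 (fun M : 'cV[R]_n => M j 0) x0) (congr1 (fun M : 'cV[R]_n => M j 0) y0).
  rewrite /x /y !mxE.
  by case: (v 0 j) => a b /= -> ->.
have hwp : w <= p by have := hP1 x; have := hP1 y; rewrite /w /p; lra.
have hpL : p <= L * w by have := hPL x; have := hPL y; rewrite /w /p; lra.
have pp : 0 < p by apply: lt_le_trans hwp.
have Lp : 0 < L by rewrite -(pmulr_lgt0 _ wp); apply: lt_le_trans hpL.
split => //.
have h1 : e * w <= (1 - l2) * p by rewrite mulrBl mul1r; lra.
have h2 : 0 < 1 - l2.
  by rewrite -(pmulr_lgt0 _ pp); apply: lt_le_trans h1; rewrite mulr_gt0.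
have h3 : (1 - l2) * p <= (1 - l2) * (L * w) by rewrite ler_wpM2l // ltW.
have h4 : e <= (1 - l2) * L.
  by rewrite -(ler_pM2r wp) -mulrA; apply: le_trans h3.
have : e / L <= 1 - l2 by rewrite ler_pdivrMr // mulrC.
lra.
Qed.


Definition epsf (z mm : R) := -1 + Num.sqrt (1 + 1 / (2 * z ^+ 2 * mm)).

Lemma epsf_ge0 z mm : 0 <= z -> 0 <= mm -> 0 <= epsf z mm.
Proof.
move=> z0 m0; rewrite /epsf addrC subr_ge0 -{1}sqrtr1 ler_sqrt; last first.
  by rewrite addr_ge0 // mul1r invr_ge0 !mulr_ge0 // sqr_ge0.
by rewrite lerDl mul1r invr_ge0 !mulr_ge0 // sqr_ge0.
Qed.

Lemma c_lt1 z mm : 0 <= z -> 0 <= mm ->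
  mm * z ^+ 2 * (4 * epsf z mm + epsf z mm ^+ 2) < 1.
Proof.
move=> z0 m0; have e0 := epsf_ge0 z0 m0.
have a0 : 0 <= mm * z ^+ 2 by rewrite mulr_ge0 // sqr_ge0.
have [->|an] := eqVneq (mm * z ^+ 2) 0; first by rewrite mul0r ltr01.
have ap : 0 < mm * z ^+ 2 by rewrite lt_def an a0.
set a := mm * z ^+ 2 in a0 an ap *.
have ha : 2 * z ^+ 2 * mm = 2 * a by rewrite /a; ring.
set t := 1 / (2 * z ^+ 2 * mm).
have t0 : 0 < t by rewrite /t ha mul1r invr_gt0 mulr_gt0 // ltr0Sn.
have hat : 2 * a * t = 1 by rewrite /t ha mul1r mulfV // mulf_neq0 // pnatr_eq0.
have hs : Num.sqrt (1 + t) ^+ 2 = 1 + t by rewrite sqr_sqrtr // addr_ge0 // ltW.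
have hs1 : 1 < Num.sqrt (1 + t) by rewrite -{1}sqrtr1 ltr_sqrt ?ltrDl // addr_gt0.
rewrite -/t in e0 *.
rewrite /epsf -/t; set s := Num.sqrt (1 + t) in hs hs1 *.
have ep : 0 < -1 + s by rewrite addrC subr_gt0.
have h1 : a * (4 * (-1 + s) + (-1 + s) ^+ 2) = 2 * a * t - a * (-1 + s) ^+ 2.
  have -> : t = s ^+ 2 - 1 by rewrite hs addrC addKr.
  ring.
rewrite h1 hat ltrBlDr ltrDl mulr_gt0 // exprn_gt0 //.
Qed.


Lemma epsf_gt0 z mm : 0 < z -> 0 < mm -> 0 < epsf z mm.
Proof.
move=> z0 m0; rewrite /epsf addrC subr_gt0 -{1}sqrtr1 ltr_sqrt; last first.
  by rewrite addr_gt0 // mul1r invr_gt0 !mulr_gt0 // ?exprn_gt0 // ltr0Sn.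
by rewrite ltrDl mul1r invr_gt0 !mulr_gt0 // ?exprn_gt0 // ltr0Sn.
Qed.

Lemma scal_bound z mm dl g sg nu ns nd nw X :
 0 <= z -> 0 <= mm -> 0 <= dl -> 0 <= g -> 0 <= X -> 0 <= nu -> 0 <= ns ->
 0 <= nd -> 0 <= nw ->
 nu <= z * X -> nd <= dl * X -> ns <= g * nw -> sg * nw <= z * X ->
 (dl = 0 \/ (epsf z mm)^-1 < z / dl) -> (g = 0 \/ (epsf z mm)^-1 < sg / g) ->
 mm * (2 * nu * ns + ns ^+ 2 + 2 * nu * nd) <=
   mm * z ^+ 2 * (4 * epsf z mm + epsf z mm ^+ 2) * X ^+ 2.
Proof.
move=> z0 m0 dl0 g0 X0 nu0 ns0 nd0 nw0 hnu hnd hns hsg HD HG.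
have [->|mn] := eqVneq mm 0; first by rewrite !mul0r.
have mp : 0 < mm by rewrite lt_def mn m0.
set e := epsf z mm.
have e0 : 0 <= e by apply: epsf_ge0.
have [hs hd] : ns <= e * z * X /\ nd <= e * z * X.
  have [zz|zn] := eqVneq z 0.
    have ez : e = 0.
      by rewrite /e /epsf zz expr0n /= mulr0 mul0r invr0 mulr0 addr0 sqrtr1 addNr.
    rewrite ez !mul0r; have ez' : epsf z mm = 0 := ez; rewrite ez' invr0 zz mul0r in HD HG.
    split.
    - case: HG => [gz|].
        by apply: le_trans hns _; rewrite gz mul0r.
      have [gz|gn] := eqVneq g 0; first by rewrite gz invr0 mulr0 ltxx.
      have gp : 0 < g by rewrite lt_def gn g0.
      move=> hg; have gi : 0 < g^-1 by rewrite invr_gt0.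
      have sgp : 0 < sg by rewrite -(pmulr_lgt0 _ gi).
      have hnw : nw <= 0.
        by rewrite -(ler_pM2l sgp) mulr0; apply: le_trans hsg _; rewrite zz mul0r.
      by apply: le_trans hns _; rewrite -(mulr0 g) ler_wpM2l.
    - case: HD => [dz|]; last by rewrite ltxx.
      by apply: le_trans hnd _; rewrite dz mul0r.
  have zp : 0 < z by rewrite lt_def zn z0.
  have ep : 0 < e by apply: epsf_gt0.
  split.
  - case: HG => [gz|hg]; first by apply: le_trans hns _; rewrite gz mul0r mulr_ge0 // mulr_ge0.
    have [gz|gn] := eqVneq g 0; first by move: hg; rewrite gz invr0 mulr0 ltNge ltW // invr_gt0.
    have gp : 0 < g by rewrite lt_def gn g0.
    have hg' : e^-1 * g < sg by rewrite -ltr_pdivlMr.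
    have hg2 : g < e * sg.
      by rewrite -(ltr_pM2l ep) mulrA mulfV ?mul1r // gt_eqF in hg'.
    apply: le_trans hns _; apply: le_trans (_ : g * nw <= e * sg * nw) _.
      by rewrite ler_wpM2r // ltW.
    by rewrite -mulrA -[X in _ <= X]mulrA ler_wpM2l.
  - case: HD => [dz|hd]; first by apply: le_trans hnd _; rewrite dz mul0r mulr_ge0 // mulr_ge0.
    have [dz|dn] := eqVneq dl 0; first by move: hd; rewrite dz invr0 mulr0 ltNge ltW // invr_gt0.
    have dp : 0 < dl by rewrite lt_def dn dl0.
    have hd' : e^-1 * dl < z by rewrite -ltr_pdivlMr.
    have hd2 : dl < e * z.
      by rewrite -(ltr_pM2l ep) mulrA mulfV ?mul1r // gt_eqF in hd'.
    by apply: le_trans hnd _; rewrite ler_wpM2r // ltW.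
have ezX : 0 <= e * z * X by rewrite !mulr_ge0.
have b1 : nu * ns <= (z * X) * (e * z * X) by apply: ler_pM.
have b2 : ns * ns <= (e * z * X) * (e * z * X) by apply: ler_pM.
have b3 : nu * nd <= (z * X) * (e * z * X) by apply: ler_pM.
apply: le_trans (_ : mm * (2 * ((z * X) * (e * z * X)) + (e * z * X) * (e * z * X)
     + 2 * ((z * X) * (e * z * X))) <= _).
  by rewrite ler_wpM2l // expr2; lra.
by rewrite le_eqVlt; apply/orP; left; apply/eqP; ring.
Qed.

End S.

Theorem proposition6 (R : realType) (n m T : nat)
    (A : 'M[R]_n) (B : 'M[R]_(n, m))
    (Z X : 'M[R]_(n, T)) (U : 'M[R]_(m, T))
    (Q : 'M[R]_n) (Rm : 'M[R]_m) (gamma : R)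
    (DZ DX : 'M[R]_(n, T)) (DU : 'M[R]_(m, T))
    (PD : 'M[R]_n) (KD : 'M[R]_(m, n)) (GD : 'M[R]_(T, n)) :
  is_psd Q -> is_pd Rm -> 0 <= gamma ->
  \rank (Gam U X) = (m + n)%N ->
  Z = A *m X + B *m U ->
  RP_optimal Q Rm gamma (Z + DZ) (X + DX) (U + DU) PD KD GD ->
  (((- 1 + Num.sqrt (1 + 1 / (2 * spec_norm Z ^+ 2
        * spec_norm (GD *m PD *m GD^T)))) ^-1)%:E <
     spr Z X DZ DX U DU)%E ->
  spectral_radius (A + B *m KD) < 1.
Proof.
move=> _ _ _ rk hZ [[Psym hfeas hP1 hK] _] hmu.
have mnT : (m + n <= T)%N by rewrite -rk rank_leq_col.
set W := row_mx B A.
set S := W *m Gam DU DX.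
set M := GD *m PD *m GD^T.
have hK' : A + B *m KD = (Z + S) *m GD.
  have <- : W *m col_mx KD 1%:M = A + B *m KD by rewrite mul_row_col mulmx1 addrC.
  rewrite hK mulmxA /S /Gam !mul_row_col !mulmxDr hZ.
  by rewrite addrACA [A *m X + _]addrC.
have hZW : Z = W *m Gam U X by rewrite /W /Gam mul_row_col hZ addrC.
set z := spec_norm Z; set mm := spec_norm M; set dl := spec_norm DZ.
set g := spec_norm (Gam DU DX); set sg := sigma_min (Gam U X).
have [HD HG] : (dl = 0 \/ (epsf z mm)^-1 < z / dl) /\ (g = 0 \/ (epsf z mm)^-1 < sg / g).
  move: hmu; rewrite /spr lt_min => /andP [h1 h2]; split.
  - move: h1; rewrite /eratio -/z -/dl; case: eqP => [->|_]; first by left.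
    by rewrite lte_fin => h; right.
  - move: h2; rewrite /eratio -/sg -/g; case: eqP => [->|_]; first by left.
    by rewrite lte_fin => h; right.
set c := mm * z ^+ 2 * (4 * epsf z mm + epsf z mm ^+ 2).
have clt1 : c < 1 by apply: c_lt1; apply: spec_ge0.
have Mq : forall v : 'cV_T, dot v (M *m v) = dot (GD^T *m v) (PD *m (GD^T *m v)).
  by move=> v; rewrite /M -!mulmxA dot_tr.
have hP1' : forall x : 'cV_n, dot x x <= dot x (PD *m x).
  move=> x; have := hP1 x; rewrite -mulmxA -/(dot _ _) mulmxBl mul1mx dotBr; lra.
have Mpos : forall v : 'cV_T, 0 <= dot v (M *m v).
  by move=> v; rewrite Mq; apply: le_trans (hP1' _); apply: dot_ge0.
have lyap : forall x : 'cV_n,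
  dot ((A + B *m KD)^T *m x) (PD *m ((A + B *m KD)^T *m x)) <=
    dot x (PD *m x) - (1 - c) * dot x x.
  move=> x.
  set u := Z^T *m x; set s := S^T *m x; set d := DZ^T *m x.
  have e1 : (A + B *m KD)^T *m x = GD^T *m (u + s).
    by rewrite hK' trmx_mul -mulmxA linearD /= mulmxDl.
  have hF : dot (u + d) (M *m (u + d)) <= dot x (PD *m x) - dot x x.
    have := hfeas x; rewrite -mulmxA -/(dot _ _) mulmxBl mul0mx sub0r dotNr oppr_ge0.
    rewrite mulmxDl mulmxBl mul1mx dotDr dotBr.
    have -> : (Z + DZ) *m GD *m PD *m GD^T *m (Z + DZ)^T *m x = (Z + DZ) *m (M *m (u + d)).
      by rewrite /M /u /d -mulmxDl -linearD /= !mulmxA.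
    rewrite dot_tr linearD /= mulmxDl -/u -/d; lra.
  rewrite e1 -Mq.
  have Bb : forall a b : 'cV_T, dot a (M *m b) <= vnorm a * (mm * vnorm b).
    move=> a b; apply: le_trans (dot_le _ _) _; apply: ler_wpM2l; first exact: vnorm_ge0.
    exact: spec_ub.
  have Bn : forall a b : 'cV_T, - (vnorm a * (mm * vnorm b)) <= dot a (M *m b).
    move=> a b; rewrite lerNl -dotNl; apply: le_trans (Bb _ _) _.
    by rewrite -scaleN1r vnormZ normrN normr1 mul1r.
  have expand : forall a b : 'cV_T, dot (a + b) (M *m (a + b)) =
      dot a (M *m a) + dot a (M *m b) + dot b (M *m a) + dot b (M *m b).
    by move=> a b; rewrite mulmxDr !(dotDl, dotDr) !addrA.
  have hnu : vnorm u <= z * vnorm x by apply: specT_ub.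
  have hnd : vnorm d <= dl * vnorm x by apply: specT_ub.
  have hns : vnorm s <= g * vnorm (W^T *m x).
    by rewrite /s /S trmx_mul -mulmxA; apply: specT_ub.
  have hsg : sg * vnorm (W^T *m x) <= z * vnorm x.
    apply: le_trans (@sigma_lb _ _ _ (Gam U X) (W^T *m x) mnT) _.
    by rewrite mulmxA -trmx_mul -hZW; apply: specT_ub.
  have := scal_bound (spec_ge0 Z) (spec_ge0 M) (spec_ge0 DZ) (spec_ge0 (Gam DU DX))
    (vnorm_ge0 x) (vnorm_ge0 u) (vnorm_ge0 s) (vnorm_ge0 d) (vnorm_ge0 _) hnu hnd hns hsg HD HG.
  rewrite -/c (vnorm_sq x) => hb.
  have mmE : spec_norm M = mm := erefl; rewrite mmE in hb.
  have := Bb u s; have := Bb s u; have := Bb s s; have := Bn u d; have := Bn d u.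
  have := Mpos d; move: hF hb; rewrite !expand.
  set nu := vnorm u; set ns := vnorm s; set nd := vnorm d.
  lra.
have hPL : forall x : 'cV_n, dot x (PD *m x) <= spec_norm PD * dot x x.
  move=> x; apply: le_trans (dot_le _ _) _.
  rewrite -vnorm_sq expr2 mulrA [spec_norm PD * vnorm x]mulrC -mulrA.
  by apply: ler_wpM2l; [exact: vnorm_ge0 | exact: spec_ub].
have e0 : 0 < 1 - c by rewrite subr_gt0.
rewrite /spectral_radius.
case: (pselect (exists l, eigenvalue (map_mx (real_complex R) (A + B *m KD)) l)) => [[l0 hl0]|hn].
  have [Lp _] := eig_bound e0 Psym hP1' hPL lyap hl0.
  apply: le_lt_trans (_ : _ <= Num.sqrt (1 - (1 - c) / spec_norm PD)) _.
    apply: ge_sup; first by exists (cmod l0), l0.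
    move=> _ [l hl <-].
    have [_ hb] := eig_bound e0 Psym hP1' hPL lyap hl.
    move: hb; case: l {hl} => a b /= hb.
    rewrite ler_sqrt //; apply: le_trans hb; by rewrite addr_ge0 // sqr_ge0.
  have hq : 0 < (1 - c) / spec_norm PD by rewrite divr_gt0.
  rewrite -[X in _ < X]sqrtr1 ltr_sqrt ?ltr01 //; lra.
rewrite (_ : [set _ | _ in _] = set0) ?sup0 ?ltr01 //.
apply/seteqP; split => y // [l hl _]; exfalso; apply: hn; by exists l.
Qed.
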